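(* Let $\mathcal X$ and $\mathcal Y$ be Banach spaces, let $A$ be a closed, densely defined linear operator from $\operatorname{dom}A\subset\mathcal X$ to $\mathcal Y$, and let $B$ be a closed, densely defined linear operator from $\operatorname{dom}B\subset\mathcal Y$ to $\mathcal X$. Assume that $\rho(AB)\neq\emptyset$ and $\rho(BA)\neq\emptyset$. Then $$\sigma(AB)\setminus\{0\}=\sigma(BA)\setminus\{0\}.$$ Moreover, for $\lambda\in\rho(AB)\setminus\{0\}$ and $\mu\in\rho(BA)$, $$(BA-\lambda)^{-1}=\lambda^{-1}\big[\overline{B(AB-\lambda)^{-1}A}-I\big]=\lambda^{-1}\big(\mu+(\lambda-\mu)B(AB-\lambda)^{-1}A\big)(BA-\mu)^{-1},$$ where the bar denotes the closure of the (densely defined, bounded) operator $B(AB-\lambda)^{-1}A$ defined on $\operatorname{dom}A$. Consequently, there exists a constant $C>0$ depending only on $A$ and $B$ such that for all $\lambda,\mu\in\rho(BA)$ with $\lambda\neq0$, $$\|(BA-\lambda)^{-1}\|\le\frac{C\,M_1(\lambda)M_2(\mu)}{|\lambda|}\Big(|\mu|+|\lambda-\mu|\,(2+|\lambda|)(2+|\mu|)\Big),$$ where $M_1(\lambda):=\max\{1,\|(AB-\lambda)^{-1}\|\}$ and $M_2(\mu):=\max\{1,\|(BA-\mu)^{-1}\|\}$.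
   Context: Products have natural domains: $\operatorname{dom}(AB)=\{y\in\operatorname{dom}B: By\in\operatorname{dom}A\}$, $\operatorname{dom}(BA)=\{x\in\operatorname{dom}A: Ax\in\operatorname{dom}B\}$. For a linear operator $S$ in a Banach space $\mathcal Z$, the resolvent set $\rho(S)$ is the set of $\lambda\in\mathbb C$ such that $S-\lambda:\operatorname{dom}S\to\mathcal Z$ is bijective with bounded inverse $(S-\lambda)^{-1}\in L(\mathcal Z)$; $\sigma(S)=\mathbb C\setminus\rho(S)$. (In particular, $\lambda\in\rho(BA)\setminus\{0\}$ implies $\lambda\in\rho(AB)$ by the first assertion, so $M_1(\lambda)$ is defined.) *)

(* Defs.v *)
From Stdlib Require Import Reals ClassicalEpsilon.
Open Scope R_scope.

Record C := mkC { Re : R; Im : R }.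
Definition C0 : C := mkC 0 0.
Definition C1 : C := mkC 1 0.
Definition Cadd (a b : C) : C := mkC (Re a + Re b) (Im a + Im b).
Definition Copp (a : C) : C := mkC (- Re a) (- Im a).
Definition Csub (a b : C) : C := Cadd a (Copp b).
Definition Cmul (a b : C) : C :=
  mkC (Re a * Re b - Im a * Im b) (Re a * Im b + Im a * Re b).
Definition Cinv (a : C) : C :=
  mkC (Re a / (Re a ^ 2 + Im a ^ 2)) (- Im a / (Re a ^ 2 + Im a ^ 2)).
Definition Cnorm (a : C) : R := sqrt (Re a ^ 2 + Im a ^ 2).

Record CBanach := {
  car :> Type;
  vzero : car;
  vadd : car -> car -> car;
  vopp : car -> car;
  vscal : C -> car -> car;
  vnorm : car -> R;
  vadd_assoc : forall x y z, vadd x (vadd y z) = vadd (vadd x y) z;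
  vadd_comm : forall x y, vadd x y = vadd y x;
  vadd_0 : forall x, vadd x vzero = x;
  vadd_opp : forall x, vadd x (vopp x) = vzero;
  vscal_1 : forall x, vscal C1 x = x;
  vscal_assoc : forall a b x, vscal a (vscal b x) = vscal (Cmul a b) x;
  vscal_distr_v : forall a x y, vscal a (vadd x y) = vadd (vscal a x) (vscal a y);
  vscal_distr_s : forall a b x, vscal (Cadd a b) x = vadd (vscal a x) (vscal b x);
  vnorm_eq0 : forall x, vnorm x = 0 -> x = vzero;
  vnorm_scal : forall a x, vnorm (vscal a x) = Cnorm a * vnorm x;
  vnorm_triangle : forall x y, vnorm (vadd x y) <= vnorm x + vnorm y;
  vcomplete : forall u : nat -> car,
    (forall eps, eps > 0 -> exists N, forall n m, (n >= N)%nat -> (m >= N)%nat ->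
        vnorm (vadd (u n) (vopp (u m))) < eps) ->
    exists l, forall eps, eps > 0 -> exists N, forall n, (n >= N)%nat ->
        vnorm (vadd (u n) (vopp l)) < eps
}.

Arguments vzero {_}.
Arguments vadd {_} _ _.
Arguments vopp {_} _.
Arguments vscal {_} _ _.
Arguments vnorm {_} _.

Definition vsub {X : CBanach} (x y : X) : X := vadd x (vopp y).

Definition seq_conv {X : CBanach} (u : nat -> X) (l : X) : Prop :=
  forall eps, eps > 0 -> exists N, forall n, (n >= N)%nat -> vnorm (vsub (u n) l) < eps.

(* A linear operator from dom T ⊂ X to Y: a domain predicate and a map,
   the map being meaningful only on the domain. *)
Record Op (X Y : CBanach) := mkOp { dom : X -> Prop; app : X -> Y }.
Arguments mkOp {X Y} _ _.
Arguments dom {X Y} _ _.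
Arguments app {X Y} _ _.

Definition linear_op {X Y : CBanach} (T : Op X Y) : Prop :=
  dom T vzero /\
  (forall x y, dom T x -> dom T y -> dom T (vadd x y)) /\
  (forall a x, dom T x -> dom T (vscal a x)) /\
  (forall x y, dom T x -> dom T y -> app T (vadd x y) = vadd (app T x) (app T y)) /\
  (forall a x, dom T x -> app T (vscal a x) = vscal a (app T x)).

Definition densely_defined {X Y : CBanach} (T : Op X Y) : Prop :=
  forall x eps, eps > 0 -> exists x', dom T x' /\ vnorm (vsub x x') < eps.

Definition closed_op {X Y : CBanach} (T : Op X Y) : Prop :=
  forall (u : nat -> X) x y, (forall n, dom T (u n)) ->
    seq_conv u x -> seq_conv (fun n => app T (u n)) y ->
    dom T x /\ app T x = y.

Definition op_comp {X Y Z : CBanach} (S : Op Y Z) (T : Op X Y) : Op X Z :=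
  mkOp (fun x => dom T x /\ dom S (app T x)) (fun x => app S (app T x)).

Definition in_graph_closure {X Y : CBanach} (T : Op X Y) (x : X) (y : Y) : Prop :=
  forall eps, eps > 0 -> exists x', dom T x' /\ vnorm (vsub x x') < eps /\
     vnorm (vsub y (app T x')) < eps.

Definition bounded_linear {X Y : CBanach} (f : X -> Y) : Prop :=
  (forall x y, f (vadd x y) = vadd (f x) (f y)) /\
  (forall a x, f (vscal a x) = vscal a (f x)) /\
  (exists M, forall x, vnorm (f x) <= M * vnorm x).

(* operator norm sup { ||f x|| : ||x|| <= 1 } (chosen classically; only used
   for bounded f, where the least upper bound exists) *)
Definition opnorm {X Y : CBanach} (f : X -> Y) : R :=
  epsilon (inhabits 0)
    (fun M => is_lub (fun r => exists x, vnorm x <= 1 /\ r = vnorm (f x)) M).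

Definition is_resolvent {Z : CBanach} (S : Op Z Z) (lam : C) (Rs : Z -> Z) : Prop :=
  bounded_linear Rs /\
  (forall z, dom S (Rs z) /\ vsub (app S (Rs z)) (vscal lam (Rs z)) = z) /\
  (forall x, dom S x -> Rs (vsub (app S x) (vscal lam x)) = x).

Definition in_rho {Z : CBanach} (S : Op Z Z) (lam : C) : Prop :=
  exists Rs, is_resolvent S lam Rs.

(* Main.v *)
Require Import Defs.
From Stdlib Require Import Reals Lra Lia Psatz Classical ClassicalEpsilon.
Open Scope R_scope.

Arguments vadd_assoc {_}. Arguments vadd_comm {_}. Arguments vadd_0 {_}. Arguments vadd_opp {_}.
Arguments vscal_1 {_}. Arguments vscal_assoc {_}. Arguments vscal_distr_v {_}. Arguments vscal_distr_s {_}.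
Arguments vnorm_eq0 {_}. Arguments vnorm_scal {_}. Arguments vnorm_triangle {_}. Arguments vcomplete {_}.

Lemma Ceq (a b : Defs.C) : Re a = Re b -> Im a = Im b -> a = b.
Proof. destruct a, b; simpl; intros; subst; reflexivity. Qed.

Section Vec.
Variable X : CBanach.
Implicit Types x y z p q r s : X.
Local Notation V := (car X).

Lemma vadd_0l x : vadd vzero x = x.
Proof. rewrite vadd_comm; apply vadd_0. Qed.
Lemma vadd_opp_l x : vadd (vopp x) x = vzero.
Proof. rewrite vadd_comm; apply vadd_opp. Qed.
Lemma vadd_cancel_l x y z : vadd x y = vadd x z -> y = z.
Proof.
  intro H. rewrite <- (vadd_0l y), <- (vadd_0l z), <- (vadd_opp_l x).
  rewrite <- !vadd_assoc, H. reflexivity.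
Qed.
Lemma vopp_unique x y : vadd x y = vzero -> y = vopp x.
Proof. intro H. apply (vadd_cancel_l x). rewrite H, vadd_opp. reflexivity. Qed.
Lemma vopp_opp x : vopp (vopp x) = x.
Proof. symmetry. apply vopp_unique. apply vadd_opp_l. Qed.
Lemma vopp_add x y : vopp (vadd x y) = vadd (vopp x) (vopp y).
Proof.
  symmetry. apply vopp_unique.
  rewrite (vadd_comm (vopp x)), vadd_assoc, <- (vadd_assoc x y), vadd_opp, vadd_0, vadd_opp.
  reflexivity.
Qed.
Lemma vopp0 : vopp (@vzero X) = vzero.
Proof. symmetry. apply vopp_unique. apply vadd_0. Qed.
Lemma vsub_self x : vsub x x = vzero.
Proof. apply vadd_opp. Qed.
Lemma vsub_0r x : vsub x vzero = x.
Proof. unfold vsub. rewrite vopp0. apply vadd_0. Qed.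
Lemma vadd_swap (a b c d : X) : vadd (vadd a b) (vadd c d) = vadd (vadd a c) (vadd b d).
Proof.
  rewrite !vadd_assoc. f_equal. rewrite <- !vadd_assoc. f_equal. apply vadd_comm.
Qed.
Lemma vsub_add_distr (a b c d : X) : vsub (vadd a b) (vadd c d) = vadd (vsub a c) (vsub b d).
Proof. unfold vsub. rewrite vopp_add. apply vadd_swap. Qed.
Lemma vsub_chain (a b c : X) : vadd (vsub a b) (vsub b c) = vsub a c.
Proof.
  unfold vsub. rewrite <- vadd_assoc, (vadd_assoc (vopp b)), vadd_opp_l, vadd_0l. reflexivity.
Qed.
Lemma vsub_opp x y : vopp (vsub x y) = vsub y x.
Proof. unfold vsub. rewrite vopp_add, vopp_opp. apply vadd_comm. Qed.
Lemma vsub_add_r (a b : X) : vsub (vadd a b) b = a.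
Proof. unfold vsub. rewrite <- vadd_assoc, vadd_opp, vadd_0. reflexivity. Qed.
Lemma vsub_eq (a b c : X) : vsub a b = c -> a = vadd c b.
Proof. intro H. subst. unfold vsub. rewrite <- vadd_assoc, vadd_opp_l, vadd_0. reflexivity. Qed.
Lemma vsub_eq0 (a b : X) : vsub a b = vzero -> a = b.
Proof. intro H. apply vsub_eq in H. rewrite H. apply vadd_0l. Qed.
Lemma vsub_add_same (a b c : X) : vsub (vadd a c) (vadd b c) = vsub a b.
Proof. rewrite vsub_add_distr, vsub_self, vadd_0. reflexivity. Qed.
Lemma vsub_sub (a b c : X) : vsub a (vadd b c) = vsub (vsub a b) c.
Proof. unfold vsub. rewrite vopp_add, vadd_assoc. reflexivity. Qed.

Lemma Cadd00 : Cadd C0 C0 = C0.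
Proof. apply Ceq; simpl; ring. Qed.
Lemma vscal_0 x : vscal C0 x = vzero.
Proof.
  apply (vadd_cancel_l (vscal C0 x)). rewrite <- vscal_distr_s, Cadd00, vadd_0. reflexivity.
Qed.
Lemma vscal_v0 a : vscal a (@vzero X) = vzero.
Proof.
  apply (vadd_cancel_l (vscal a vzero)). rewrite <- vscal_distr_v, !vadd_0. reflexivity.
Qed.
Lemma vscal_opp_v a x : vscal a (vopp x) = vopp (vscal a x).
Proof. apply vopp_unique. rewrite <- vscal_distr_v, vadd_opp. apply vscal_v0. Qed.
Lemma vscal_sub a x y : vscal a (vsub x y) = vsub (vscal a x) (vscal a y).
Proof. unfold vsub. rewrite vscal_distr_v, vscal_opp_v. reflexivity. Qed.
Lemma vopp_scal x : vopp x = vscal (Copp Defs.C1) x.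
Proof.
  symmetry. apply vopp_unique. rewrite <- (vscal_1 x) at 1. rewrite <- vscal_distr_s.
  replace (Cadd Defs.C1 (Copp Defs.C1)) with C0 by (apply Ceq; simpl; ring). apply vscal_0.
Qed.
Lemma vscal_sub_s a b x : vscal (Csub a b) x = vsub (vscal a x) (vscal b x).
Proof.
  unfold Csub, vsub. rewrite vscal_distr_s. f_equal.
  rewrite vopp_scal, vscal_assoc. f_equal. apply Ceq; simpl; ring.
Qed.
Lemma vscal_comm a b x : vscal a (vscal b x) = vscal b (vscal a x).
Proof. rewrite !vscal_assoc. f_equal. apply Ceq; simpl; ring. Qed.

Lemma Cnorm_C0 : Cnorm C0 = 0.
Proof. unfold Cnorm, C0. cbn [Re Im]. replace (0 ^ 2 + 0 ^ 2) with 0 by ring. apply sqrt_0. Qed.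
Lemma Cnorm_real t : Cnorm (mkC t 0) = Rabs t.
Proof. unfold Cnorm; simpl. rewrite <- sqrt_Rsqr_abs. f_equal. unfold Rsqr; ring. Qed.
Lemma Cnorm_nonneg a : 0 <= Cnorm a.
Proof. apply sqrt_pos. Qed.
Lemma Cnorm_opp a : Cnorm (Copp a) = Cnorm a.
Proof. unfold Cnorm; simpl. f_equal. ring. Qed.
Lemma Cnorm_C1 : Cnorm Defs.C1 = 1.
Proof. unfold Defs.C1. rewrite Cnorm_real. apply Rabs_R1. Qed.
Lemma vnorm_0 : vnorm (@vzero X) = 0.
Proof. rewrite <- (vscal_0 vzero), vnorm_scal, Cnorm_C0. ring. Qed.
Lemma vnorm_opp x : vnorm (vopp x) = vnorm x.
Proof. rewrite vopp_scal, vnorm_scal, Cnorm_opp, Cnorm_C1. ring. Qed.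
Lemma vnorm_nonneg x : 0 <= vnorm x.
Proof.
  pose proof (vnorm_triangle x (vopp x)). rewrite vadd_opp, vnorm_0, vnorm_opp in H. lra.
Qed.
Lemma vnorm_sub_sym x y : vnorm (vsub x y) = vnorm (vsub y x).
Proof. rewrite <- vsub_opp. apply vnorm_opp. Qed.
Lemma vnorm_sub_tri (a b c : X) : vnorm (vsub a c) <= vnorm (vsub a b) + vnorm (vsub b c).
Proof. rewrite <- (vsub_chain a b c). apply vnorm_triangle. Qed.
Lemma vnorm_sub_le (a b : X) : vnorm (vsub a b) <= vnorm a + vnorm b.
Proof. unfold vsub. rewrite <- (vnorm_opp b). apply vnorm_triangle. Qed.
Lemma vnorm_real_scal t x : vnorm (vscal (mkC t 0) x) = Rabs t * vnorm x.
Proof. rewrite vnorm_scal, Cnorm_real. reflexivity. Qed.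
Lemma vnorm_le_eps x : (forall eps, eps > 0 -> vnorm x <= eps) -> x = vzero.
Proof.
  intro H. apply vnorm_eq0. pose proof (vnorm_nonneg x).
  destruct (Rle_lt_or_eq_dec _ _ H0) as [Hl|He]; [|auto].
  specialize (H (vnorm x / 2) ltac:(lra)). lra.
Qed.
Lemma vnorm_sub_0 x : vnorm (vsub x vzero) = vnorm x.
Proof. rewrite vsub_0r. reflexivity. Qed.
End Vec.
Lemma Cnorm_triangle (a b : Defs.C) : Cnorm (Cadd a b) <= Cnorm a + Cnorm b.
Proof.
  destruct a as [a1 a2], b as [b1 b2]. unfold Cnorm, Cadd. cbn [Re Im].
  set (A := a1^2+a2^2). set (B := b1^2+b2^2).
  assert (HA : 0 <= A) by (unfold A; nra). assert (HB : 0 <= B) by (unfold B; nra).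
  pose proof (sqrt_sqrt A HA). pose proof (sqrt_sqrt B HB).
  pose proof (sqrt_pos A). pose proof (sqrt_pos B).
  set (sA := sqrt A) in *. set (sB := sqrt B) in *.
  assert (Hc : a1*b1+a2*b2 <= sA*sB).
  { assert ((a1*b1+a2*b2)^2 <= (sA*sB)^2).
    { replace ((sA*sB)^2) with ((sA*sA)*(sB*sB)) by ring. rewrite H, H0. unfold A, B.
      assert (E : (a1^2+a2^2)*(b1^2+b2^2) - (a1*b1+a2*b2)^2 = (a1*b2-a2*b1)^2) by ring.
      pose proof (pow2_ge_0 (a1*b2-a2*b1)). lra. }
    assert (0 <= sA*sB) by nra. nra. }
  rewrite <- (sqrt_Rsqr (sA+sB)) by lra. apply sqrt_le_1_alt. unfold Rsqr.
  unfold A, B in *. nra.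
Qed.

Lemma sq_pos_or (a1 a2 : R) : ~ (a1 = 0 /\ a2 = 0) -> 0 < a1^2 + a2^2.
Proof.
  intro H. destruct (Req_dec a1 0) as [H1|H1].
  - destruct (Req_dec a2 0) as [H2|H2]; [tauto|].
    pose proof (Rsqr_pos_lt a2 H2). unfold Rsqr in *. pose proof (pow2_ge_0 a1). simpl in *. nra.
  - pose proof (Rsqr_pos_lt a1 H1). unfold Rsqr in *. pose proof (pow2_ge_0 a2). simpl in *. nra.
Qed.

Lemma Cne0 (a : Defs.C) : a <> C0 -> 0 < Re a ^ 2 + Im a ^ 2.
Proof.
  intro H. apply sq_pos_or. intros [H1 H2]. apply H. destruct a; simpl in *; subst; reflexivity.
Qed.

Lemma Cnorm_pos (a : Defs.C) : a <> C0 -> 0 < Cnorm a.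
Proof. intro H. unfold Cnorm. apply sqrt_lt_R0. apply Cne0; auto. Qed.

Lemma Cmul_inv_r (a : Defs.C) : a <> C0 -> Cmul a (Cinv a) = Defs.C1.
Proof.
  intro H. pose proof (Cne0 a H). destruct a as [a1 a2]; cbn [Re Im] in *.
  apply Ceq; unfold Cmul, Cinv, Defs.C1; cbn [Re Im]; field; lra.
Qed.
Lemma Cmul_inv_l (a : Defs.C) : a <> C0 -> Cmul (Cinv a) a = Defs.C1.
Proof.
  intro H. pose proof (Cne0 a H). destruct a as [a1 a2]; cbn [Re Im] in *.
  apply Ceq; unfold Cmul, Cinv, Defs.C1; cbn [Re Im]; field; lra.
Qed.
Lemma Cnorm_sub_le (a b : Defs.C) : Cnorm (Csub a b) <= Cnorm a + Cnorm b.
Proof. unfold Csub. rewrite <- (Cnorm_opp b). apply Cnorm_triangle. Qed.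

Section Lin.
Variables X Y : CBanach.
Variable T : Op X Y.
Hypothesis HT : linear_op T.
Lemma lin_dom0 : dom T vzero. Proof. apply HT. Qed.
Lemma lin_dom_add x y : dom T x -> dom T y -> dom T (vadd x y). Proof. apply HT. Qed.
Lemma lin_dom_scal a x : dom T x -> dom T (vscal a x). Proof. apply HT. Qed.
Lemma lin_dom_opp x : dom T x -> dom T (vopp x).
Proof. intro. rewrite vopp_scal. apply lin_dom_scal; auto. Qed.
Lemma lin_dom_sub x y : dom T x -> dom T y -> dom T (vsub x y).
Proof. intros. apply lin_dom_add; auto. apply lin_dom_opp; auto. Qed.
Lemma lin_add x y : dom T x -> dom T y -> app T (vadd x y) = vadd (app T x) (app T y).
Proof. apply HT. Qed.
Lemma lin_scal a x : dom T x -> app T (vscal a x) = vscal a (app T x).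
Proof. apply HT. Qed.
Lemma lin_0 : app T vzero = vzero.
Proof. rewrite <- (vscal_0 X vzero), lin_scal by apply lin_dom0. apply vscal_0. Qed.
Lemma lin_opp x : dom T x -> app T (vopp x) = vopp (app T x).
Proof. intro. rewrite !vopp_scal. apply lin_scal; auto. Qed.
Lemma lin_sub x y : dom T x -> dom T y -> app T (vsub x y) = vsub (app T x) (app T y).
Proof. intros. unfold vsub. rewrite lin_add, lin_opp; auto. apply lin_dom_opp; auto. Qed.
End Lin.

Lemma lin_comp {X Y Z : CBanach} (S : Op Y Z) (T : Op X Y) :
  linear_op S -> linear_op T -> linear_op (op_comp S T).
Proof.
  intros HS HT. unfold op_comp, linear_op; simpl. split; [|split; [|split; [|split]]].
  - split. apply lin_dom0; auto. rewrite lin_0 by auto. apply lin_dom0; auto.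
  - intros x y [? ?] [? ?]. split. apply lin_dom_add; auto.
    rewrite lin_add by auto. apply lin_dom_add; auto.
  - intros a x [? ?]. split. apply lin_dom_scal; auto.
    rewrite lin_scal by auto. apply lin_dom_scal; auto.
  - intros x y [? ?] [? ?]. rewrite !lin_add by auto. reflexivity.
  - intros a x [? ?]. rewrite !lin_scal by auto. reflexivity.
Qed.

Section BL.
Variables X Y : CBanach.
Variable f : X -> Y.
Hypothesis Hf : bounded_linear f.
Lemma bl_add x y : f (vadd x y) = vadd (f x) (f y). Proof. apply Hf. Qed.
Lemma bl_scal a x : f (vscal a x) = vscal a (f x). Proof. apply Hf. Qed.
Lemma bl_0 : f vzero = vzero.
Proof. rewrite <- (vscal_0 X vzero), bl_scal. apply vscal_0. Qed.
Lemma bl_opp x : f (vopp x) = vopp (f x).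
Proof. rewrite !vopp_scal. apply bl_scal. Qed.
Lemma bl_sub x y : f (vsub x y) = vsub (f x) (f y).
Proof. unfold vsub. rewrite bl_add, bl_opp. reflexivity. Qed.
Lemma bl_bound : exists M, 0 <= M /\ forall x, vnorm (f x) <= M * vnorm x.
Proof.
  destruct Hf as [_ [_ [M HM]]]. exists (Rabs M). split; [apply Rabs_pos|].
  intro x. eapply Rle_trans; [apply HM|]. apply Rmult_le_compat_r; [apply vnorm_nonneg|].
  apply RRle_abs.
Qed.
Lemma bl_cont u l : seq_conv u l -> seq_conv (fun n => f (u n)) (f l).
Proof.
  intros Hu eps Heps. destruct bl_bound as [M [HM0 HM]].
  destruct (Hu (eps / (M+1))) as [N HN]. { apply Rdiv_lt_0_compat; lra. }
  exists N. intros n Hn. rewrite <- bl_sub. eapply Rle_lt_trans; [apply HM|].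
  specialize (HN n Hn). pose proof (vnorm_nonneg _ (vsub (u n) l)).
  apply Rlt_le_trans with ((M+1) * (eps/(M+1))); [nra|].
  right. field. lra.
Qed.

Definition opset := fun r => exists x, vnorm x <= 1 /\ r = vnorm (f x).
Lemma opnorm_spec : is_lub opset (opnorm f).
Proof.
  unfold opnorm. apply epsilon_spec.
  destruct bl_bound as [M [HM0 HM]].
  destruct (completeness opset) as [l Hl].
  - exists M. intros r [x [Hx ->]]. eapply Rle_trans; [apply HM|]. nra.
  - exists (vnorm (f vzero)). exists vzero. rewrite vnorm_0. split; [lra|reflexivity].
  - exists l. exact Hl.
Qed.
Lemma opnorm_nonneg : 0 <= opnorm f.
Proof.
  destruct opnorm_spec as [H1 _]. eapply Rle_trans; [apply (vnorm_nonneg _ (f vzero))|].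
  apply H1. exists vzero. rewrite vnorm_0. split; [lra|reflexivity].
Qed.
Lemma opnorm_bound x : vnorm (f x) <= opnorm f * vnorm x.
Proof.
  destruct (Req_dec (vnorm x) 0) as [H0|H0].
  - apply vnorm_eq0 in H0. subst. rewrite bl_0. rewrite !vnorm_0. rewrite Rmult_0_r. lra.
  - pose proof (vnorm_nonneg _ x) as Hn.
    assert (Hp : 0 < vnorm x) by lra.
    destruct opnorm_spec as [H1 _].
    assert (H2 : vnorm (f (vscal (mkC (/ vnorm x) 0) x)) <= opnorm f).
    { apply H1. eexists. split; [|reflexivity]. rewrite vnorm_real_scal.
      rewrite Rabs_right by (left; apply Rinv_0_lt_compat; lra). right. field. lra. }
    rewrite bl_scal, vnorm_real_scal, Rabs_right in H2 by (left; apply Rinv_0_lt_compat; lra).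
    apply Rmult_le_compat_r with (r := vnorm x) in H2; [|lra].
    replace (/ vnorm x * vnorm (f x) * vnorm x) with (vnorm (f x)) in H2 by (field; lra).
    exact H2.
Qed.
Lemma opnorm_le c : 0 <= c -> (forall x, vnorm (f x) <= c * vnorm x) -> opnorm f <= c.
Proof.
  intros Hc H. destruct opnorm_spec as [_ H2]. apply H2.
  intros r [x [Hx ->]]. eapply Rle_trans; [apply H|]. nra.
Qed.
End BL.

Definition bseq {Y : CBanach} (pk : nat -> Y -> R -> Y * R) : nat -> Y * R :=
  fix go k := match k with
  | O => (vzero, 1)
  | S k => let cr := go k in let p := pk k (fst cr) (snd cr) in
      (fst p, Rmin (snd p / 2) (Rmin ((snd cr - vnorm (vsub (fst p) (fst cr))) / 2) (snd cr / 2)))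
  end.

Lemma le_of_lt_eps (a b : R) : (forall eps, eps > 0 -> a < b + eps) -> a <= b.
Proof. intro H. apply Rnot_lt_le. intro Hl. specialize (H (a - b) ltac:(lra)). lra. Qed.

Lemma half_pow_small eps : eps > 0 -> exists N, forall n, (n >= N)%nat -> (1/2)^n < eps.
Proof.
  intro He. destruct (pow_lt_1_zero (1/2) ltac:(rewrite Rabs_right; lra) eps He) as [N HN].
  exists N. intros n Hn. specialize (HN n Hn). rewrite Rabs_right in HN; auto.
  left. apply pow_lt. lra.
Qed.

Lemma baire (Y : CBanach) (F : nat -> Y -> Prop) (cover : forall y, exists n, F n y) :
  exists n y0 r, r > 0 /\ forall y, vnorm (vsub y y0) < r -> forall d, d > 0 ->
    exists y', F n y' /\ vnorm (vsub y y') < d.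
Proof.
  apply NNPP. intro Hneg.
  set (P := fun n (y0 : Y) r (p : Y * R) => vnorm (vsub (fst p) y0) < r /\ snd p > 0 /\
        forall y', F n y' -> snd p <= vnorm (vsub (fst p) y')).
  assert (H : forall n y0 r, r > 0 -> exists p, P n y0 r p).
  { intros n y0 r Hr. apply NNPP; intro Hc. apply Hneg. exists n, y0, r. split; auto.
    intros y Hy d Hd. apply NNPP; intro Hd'. apply Hc. exists (y, d). unfold P; simpl.
    split; auto. split; auto. intros y' Hy'. apply Rnot_lt_le. intro Hlt. apply Hd'. eauto. }
  set (pk := fun n y0 r => epsilon (inhabits (y0, 1)) (fun p => r > 0 -> P n y0 r p)).
  assert (Hpk : forall n y0 r, r > 0 -> P n y0 r (pk n y0 r)).
  { intros n y0 r Hr. unfold pk.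
    refine (epsilon_spec (inhabits (y0, 1)) (fun p => r > 0 -> P n y0 r p) _ Hr).
    destruct (H n y0 r Hr) as [p Hp]. exists p. auto. }
  set (c := fun k => fst (bseq pk k)). set (r := fun k => snd (bseq pk k)).
  assert (Hstep : forall k, r k > 0 -> r (S k) > 0 /\ r (S k) <= r k / 2 /\
            vnorm (vsub (c (S k)) (c k)) + r (S k) <= r k /\
            r (S k) <= snd (pk k (c k) (r k)) / 2 /\ snd (pk k (c k) (r k)) > 0 /\
            forall y', F k y' -> snd (pk k (c k) (r k)) <= vnorm (vsub (c (S k)) y')).
  { intros k Hk. destruct (Hpk k (c k) (r k) Hk) as [H1 [H2 H3]].
    unfold r at 1 2 4, c at 1 3; simpl. fold (c k) (r k).
    set (p := pk k (c k) (r k)) in *.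
    set (d := vnorm (vsub (fst p) (c k))) in *.
    pose proof (Rmin_l (snd p / 2) (Rmin ((r k - d) / 2) (r k / 2))).
    pose proof (Rmin_r (snd p / 2) (Rmin ((r k - d) / 2) (r k / 2))).
    pose proof (Rmin_l ((r k - d) / 2) (r k / 2)).
    pose proof (Rmin_r ((r k - d) / 2) (r k / 2)).
    assert (0 < Rmin (snd p / 2) (Rmin ((r k - d) / 2) (r k / 2))).
    { apply Rmin_glb_lt; [lra|]. apply Rmin_glb_lt; lra. }
    repeat split; try lra; auto. }
  assert (Hpos : forall k, r k > 0).
  { induction k. unfold r; simpl; lra. apply Hstep; auto. }
  assert (Hr : forall k, r k <= (1/2)^k).
  { induction k. unfold r; simpl; lra. destruct (Hstep k (Hpos k)) as [_ [? _]]. simpl. lra. }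
  assert (Hnest : forall m k, vnorm (vsub (c (k + m)%nat) (c k)) + r (k + m)%nat <= r k).
  { induction m; intro k.
    - rewrite Nat.add_0_r, vsub_self, vnorm_0. lra.
    - replace (k + S m)%nat with (S (k + m)) by lia.
      destruct (Hstep (k+m)%nat (Hpos _)) as [_ [_ [H3 _]]]. specialize (IHm k).
      pose proof (vnorm_sub_tri _ (c (S (k + m))) (c (k+m)%nat) (c k)). lra. }
  assert (Hcauchy : forall eps, eps > 0 -> exists N, forall n m, (n >= N)%nat -> (m >= N)%nat ->
        vnorm (vadd (c n) (vopp (c m))) < eps).
  { intros eps He. destruct (half_pow_small eps He) as [N HN]. exists N. intros n m Hn Hm.
    fold (vsub (c n) (c m)).
    destruct (Nat.le_ge_cases m n) as [Hmn|Hmn].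
    - replace n with (m + (n - m))%nat by lia. pose proof (Hnest (n - m)%nat m).
      pose proof (Hpos (m + (n-m))%nat). pose proof (Hr m). pose proof (HN m Hm). lra.
    - rewrite vnorm_sub_sym. replace m with (n + (m - n))%nat by lia. pose proof (Hnest (m - n)%nat n).
      pose proof (Hpos (n + (m-n))%nat). pose proof (Hr n). pose proof (HN n Hn). lra. }
  destruct (vcomplete c Hcauchy) as [l Hl].
  assert (Hlim : forall k, vnorm (vsub l (c k)) <= r k).
  { intro k. apply le_of_lt_eps. intros eps He. destruct (Hl eps He) as [N HN].
    specialize (HN (N + k)%nat ltac:(lia)). fold (vsub (c (N+k)%nat) l) in HN.
    rewrite vnorm_sub_sym in HN.
    pose proof (vnorm_sub_tri _ l (c (N+k)%nat) (c k)).
    replace (N + k)%nat with (k + N)%nat in * by lia.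
    pose proof (Hnest N k). pose proof (Hpos (k+N)%nat). lra. }
  destruct (cover l) as [j Hj].
  destruct (Hstep j (Hpos j)) as [_ [_ [_ [H4 [H5 H6]]]]].
  specialize (H6 l Hj). rewrite vnorm_sub_sym in H6. specialize (Hlim (S j)). lra.
Qed.

Lemma vsub_sub_sub (X : CBanach) (p a q b : X) :
  vsub (vsub p a) (vsub q b) = vsub (vsub p q) (vsub a b).
Proof. unfold vsub. rewrite !vopp_add, !vopp_opp. apply vadd_swap. Qed.
Lemma vsub_add_l (X : CBanach) (a b c : X) : vsub (vadd a b) c = vadd (vsub a c) b.
Proof. unfold vsub. rewrite <- !vadd_assoc. f_equal. apply vadd_comm. Qed.

Lemma aux_small (x A B q p eps : R) : 0 <= A -> 0 <= B -> 0 < p -> 0 < q ->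
  (A + B + 1) * q < eps -> x <= A * (q - p) -> x < eps.
Proof. intros. nra. Qed.

Lemma cgt (Y X : CBanach) (T : Y -> X)
  (Tadd : forall y1 y2, T (vadd y1 y2) = vadd (T y1) (T y2))
  (Tscal : forall a y, T (vscal a y) = vscal a (T y))
  (Tcl : forall u y x, seq_conv u y -> seq_conv (fun n => T (u n)) x -> T y = x) :
  exists M, 0 <= M /\ forall y, vnorm (T y) <= M * vnorm y.
Proof.
  assert (T0 : T vzero = vzero).
  { rewrite <- (vscal_0 Y vzero), Tscal. apply vscal_0. }
  assert (Tsub : forall a b, T (vsub a b) = vsub (T a) (T b)).
  { intros a b. unfold vsub. rewrite Tadd, !vopp_scal, Tscal. reflexivity. }
  destruct (baire Y (fun n y => vnorm (T y) <= INR n)) as [n [y0 [r [Hr Hb]]]].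
  { intro y. destruct (INR_unbounded (vnorm (T y))) as [n Hn]. exists n. lra. }
  assert (HA : forall y, vnorm y < r -> forall d, d > 0 ->
             exists y', vnorm (T y') <= 2 * INR n /\ vnorm (vsub y y') < d).
  { intros y Hy d Hd.
    destruct (Hb (vadd y0 y) ltac:(rewrite vadd_comm, vsub_add_r; exact Hy) (d/2) ltac:(lra))
      as [a [Ha1 Ha2]].
    destruct (Hb y0 ltac:(rewrite vsub_self, vnorm_0; lra) (d/2) ltac:(lra)) as [b [Hb1 Hb2]].
    exists (vsub a b). split.
    - rewrite Tsub. pose proof (vnorm_sub_le _ (T a) (T b)). lra.
    - assert (E : vsub y (vsub a b) = vsub (vsub (vadd y0 y) a) (vsub y0 b)).
      { rewrite vsub_sub_sub, vadd_comm, vsub_add_r. reflexivity. }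
      rewrite E. pose proof (vnorm_sub_le _ (vsub (vadd y0 y) a) (vsub y0 b)). lra. }
  set (K := 4 * INR n / r + 1).
  assert (HK : 4 * INR n / r <= K) by (unfold K; lra).
  assert (HK0 : 0 < K).
  { unfold K. pose proof (pos_INR n). assert (0 <= 4 * INR n / r) by (unfold Rdiv; apply Rmult_le_pos; [lra|left; apply Rinv_0_lt_compat; lra]). lra. }
  assert (HB : forall y d, d > 0 -> exists y', vnorm (T y') <= K * vnorm y /\ vnorm (vsub y y') < d).
  { intros y d Hd. destruct (Req_dec (vnorm y) 0) as [H0|H0].
    - apply vnorm_eq0 in H0. subst. exists vzero. rewrite T0, vsub_self, !vnorm_0. split; lra.
    - pose proof (vnorm_nonneg _ y). assert (Hy : 0 < vnorm y) by lra.
      set (s := r / (2 * vnorm y)).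
      assert (Hs : 0 < s) by (unfold s; apply Rdiv_lt_0_compat; lra).
      destruct (HA (vscal (mkC s 0) y) ltac:(rewrite vnorm_real_scal, Rabs_right by lra; unfold s; field_simplify; lra)
                   (d * s) ltac:(nra)) as [y'' [H1 H2]].
      exists (vscal (mkC (/ s) 0) y''). split.
      + rewrite Tscal, vnorm_real_scal, Rabs_right by (left; apply Rinv_0_lt_compat; lra).
        apply Rle_trans with (/ s * (2 * INR n)).
        { apply Rmult_le_compat_l; [left; apply Rinv_0_lt_compat; lra| exact H1]. }
        replace (/ s * (2 * INR n)) with (4 * INR n / r * vnorm y) by (unfold s; field; lra).
        apply Rmult_le_compat_r; lra.
      + assert (E : vsub y (vscal (mkC (/ s) 0) y'') = vscal (mkC (/ s) 0) (vsub (vscal (mkC s 0) y) y'')).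
        { rewrite vscal_sub, vscal_assoc.
          replace (Cmul (mkC (/ s) 0) (mkC s 0)) with Defs.C1
            by (apply Ceq; unfold Cmul, Defs.C1; cbn [Re Im]; field; lra).
          rewrite vscal_1. reflexivity. }
        rewrite E, vnorm_real_scal, Rabs_right by (left; apply Rinv_0_lt_compat; lra).
        apply Rlt_le_trans with (/ s * (d * s)).
        { apply Rmult_lt_compat_l; [apply Rinv_0_lt_compat; lra| exact H2]. }
        right. field. lra. }
  exists (2 * K). split; [lra|]. intro y.
  destruct (Req_dec (vnorm y) 0) as [H0|H0].
  { apply vnorm_eq0 in H0. subst. rewrite T0, !vnorm_0, Rmult_0_r. lra. }
  pose proof (vnorm_nonneg _ y). assert (Hy : 0 < vnorm y) by lra.
  set (g := fun (z : Y) d => epsilon (inhabits vzero)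
          (fun y' => d > 0 -> vnorm (T y') <= K * vnorm z /\ vnorm (vsub z y') < d)).
  assert (Hg : forall z d, d > 0 -> vnorm (T (g z d)) <= K * vnorm z /\ vnorm (vsub z (g z d)) < d).
  { intros z d Hd. unfold g.
    refine (epsilon_spec (inhabits vzero)
      (fun y' => d > 0 -> vnorm (T y') <= K * vnorm z /\ vnorm (vsub z y') < d) _ Hd).
    destruct (HB z d Hd) as [y' Hy']. exists y'. auto. }
  set (Sq := nat_rect (fun _ => Y) vzero
               (fun k s => vadd s (g (vsub y s) (vnorm y * (1/2)^(S k))))).
  assert (HS : forall k, Sq (S k) = vadd (Sq k) (g (vsub y (Sq k)) (vnorm y * (1/2)^(S k))))
    by reflexivity.
  assert (HS0 : Sq O = vzero) by reflexivity.
  assert (Hpw : forall k, 0 < (1/2)^k) by (intro; apply pow_lt; lra).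
  assert (He : forall k, vnorm (vsub y (Sq k)) <= vnorm y * (1/2)^k).
  { induction k.
    - rewrite HS0, vsub_0r. simpl. lra.
    - rewrite HS, vsub_sub. specialize (Hpw (S k)).
      destruct (Hg (vsub y (Sq k)) (vnorm y * (1/2)^(S k)) ltac:(nra)) as [_ H2]. lra. }
  assert (HTg : forall k, vnorm (T (g (vsub y (Sq k)) (vnorm y * (1/2)^(S k)))) <= K * (vnorm y * (1/2)^k)).
  { intro k. specialize (Hpw (S k)).
    destruct (Hg (vsub y (Sq k)) (vnorm y * (1/2)^(S k)) ltac:(nra)) as [H1 _].
    eapply Rle_trans; [exact H1|]. apply Rmult_le_compat_l; [lra|apply He]. }
  assert (HC : forall d m, vnorm (vsub (T (Sq (m + d)%nat)) (T (Sq m))) <=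
                2 * K * vnorm y * ((1/2)^m - (1/2)^(m+d))).
  { induction d; intro m.
    - rewrite Nat.add_0_r, vsub_self, vnorm_0. lra.
    - replace (m + S d)%nat with (S (m + d)) by lia. rewrite HS, Tadd, vsub_add_l.
      eapply Rle_trans; [apply vnorm_triangle|]. specialize (IHd m). specialize (HTg (m+d)%nat).
      eapply Rle_trans; [apply Rplus_le_compat; [exact IHd | exact HTg]|].
      right. simpl pow. field. }
  assert (Hsmall : forall eps, eps > 0 -> exists N, forall k, (k >= N)%nat ->
             (2 * K * vnorm y + vnorm y + 1) * (1/2)^k < eps).
  { intros eps Heps. destruct (half_pow_small (eps / (2 * K * vnorm y + vnorm y + 1))) as [N HN].
    { apply Rdiv_lt_0_compat; nra. }
    exists N. intros k Hk. specialize (HN k Hk).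
    apply Rmult_lt_compat_l with (r := 2 * K * vnorm y + vnorm y + 1) in HN; [|nra].
    replace ((2 * K * vnorm y + vnorm y + 1) * (eps / (2 * K * vnorm y + vnorm y + 1))) with eps in HN
      by (field; nra). exact HN. }
  destruct (vcomplete (fun k => T (Sq k))) as [x Hx].
  { intros eps Heps. destruct (Hsmall eps Heps) as [N HN]. exists N. intros a b Ha Hb'.
    fold (vsub (T (Sq a)) (T (Sq b))).
    destruct (Nat.le_ge_cases b a) as [Hab|Hab].
    - replace a with (b + (a - b))%nat by lia.
      refine (aux_small _ _ _ _ _ _ _ _ (Hpw _) (Hpw b) (HN b Hb') (HC (a - b)%nat b)); nra.
    - rewrite vnorm_sub_sym. replace b with (a + (b - a))%nat by lia.
      refine (aux_small _ _ _ _ _ _ _ _ (Hpw _) (Hpw a) (HN a Ha) (HC (b - a)%nat a)); nra. }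
  assert (HTy : T y = x).
  { apply (Tcl Sq).
    - intros eps Heps. destruct (Hsmall eps Heps) as [N HN]. exists N. intros k Hk.
      rewrite vnorm_sub_sym. specialize (He k). specialize (HN k Hk). specialize (Hpw k). nra.
    - exact Hx. }
  rewrite HTy. apply le_of_lt_eps. intros eps Heps. destruct (Hx eps Heps) as [N HN].
  specialize (HN N (le_n N)). simpl in HN.
  pose proof (HC N O). rewrite Nat.add_0_l, HS0, T0, vsub_0r in H1. simpl pow in H1.
  pose proof (vnorm_sub_le _ x (T (Sq N))). fold (vsub (T (Sq N)) x) in HN. rewrite vnorm_sub_sym in HN.
  assert (vnorm x <= vnorm (vsub x (T (Sq N))) + vnorm (T (Sq N))).
  { pose proof (vnorm_triangle (vsub x (T (Sq N))) (T (Sq N))).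
    unfold vsub in H3 at 1. rewrite <- vadd_assoc, vadd_opp_l, vadd_0 in H3. exact H3. }
  specialize (Hpw N). assert (0 <= 2*K*vnorm y*(1/2)^N) by (apply Rmult_le_pos; [nra|lra]). lra.
Qed.

Lemma vsub_sub_self (X : CBanach) (a b : X) : vsub a (vsub a b) = b.
Proof. unfold vsub. rewrite vopp_add, vopp_opp, vadd_assoc, vadd_opp, vadd_0l. reflexivity. Qed.

Section Res.
Variable Z : CBanach.
Variable T : Op Z Z.
Hypothesis HT : linear_op T.

Lemma shift_lin lam p q : dom T p -> dom T q ->
  vsub (app T (vsub p q)) (vscal lam (vsub p q)) =
  vsub (vsub (app T p) (vscal lam p)) (vsub (app T q) (vscal lam q)).
Proof.
  intros Hp Hq. rewrite lin_sub, vscal_sub by auto. apply vsub_sub_sub.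
Qed.

Lemma res_unique lam R R' : is_resolvent T lam R -> is_resolvent T lam R' -> forall z, R z = R' z.
Proof.
  intros [_ [H1 H2]] [_ [H1' H2']] z. destruct (H1' z) as [Hd He].
  rewrite <- He at 1. apply H2. exact Hd.
Qed.

Lemma res_shift lam l0 R1 R0 : is_resolvent T lam R1 -> is_resolvent T l0 R0 ->
  forall y, R1 y = R0 (vadd y (vscal (Csub lam l0) (R1 y))).
Proof.
  intros [_ [H1 _]] [_ [_ H2]] y. destruct (H1 y) as [Hd He].
  set (v := R1 y) in *. rewrite <- (H2 v Hd) at 1. f_equal.
  rewrite vscal_sub_s, <- He at 1. symmetry. apply vsub_chain.
Qed.

Lemma res_comp_bound (W : CBanach) (E : Z -> W) lam l0 R1 R0 KB :
  is_resolvent T lam R1 -> is_resolvent T l0 R0 -> 0 <= KB ->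
  (forall y, vnorm (E (R0 y)) <= KB * vnorm y) ->
  forall y, vnorm (E (R1 y)) <= KB * (1 + Cnorm (Csub lam l0) * opnorm R1) * vnorm y.
Proof.
  intros H1 H0 HK HE y. rewrite (res_shift _ _ _ _ H1 H0 y).
  eapply Rle_trans; [apply HE|]. rewrite Rmult_assoc. apply Rmult_le_compat_l; [exact HK|].
  eapply Rle_trans; [apply vnorm_triangle|]. rewrite vnorm_scal.
  pose proof (opnorm_bound _ _ R1 (proj1 H1) y). pose proof (Cnorm_nonneg (Csub lam l0)).
  pose proof (vnorm_nonneg _ y).
  assert (Cnorm (Csub lam l0) * vnorm (R1 y) <= Cnorm (Csub lam l0) * (opnorm R1 * vnorm y))
    by (apply Rmult_le_compat_l; auto). nra.
Qed.
End Res.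

Lemma bl_comb (X Y : CBanach) (f g : X -> Y) (a b c : Defs.C) :
  bounded_linear f -> bounded_linear g ->
  bounded_linear (fun x => vscal c (vadd (vscal a (f x)) (vscal b (g x)))).
Proof.
  intros Hf Hg. split; [|split].
  - intros x y. cbv beta. rewrite (bl_add _ _ f Hf), (bl_add _ _ g Hg), !vscal_distr_v, vadd_swap.
    reflexivity.
  - intros d x. cbv beta. rewrite (bl_scal _ _ f Hf), (bl_scal _ _ g Hg).
    rewrite (vscal_comm _ a d), (vscal_comm _ b d), <- vscal_distr_v, vscal_comm. reflexivity.
  - destruct (bl_bound _ _ f Hf) as [Mf [Hf0 HMf]]. destruct (bl_bound _ _ g Hg) as [Mg [Hg0 HMg]].
    exists (Cnorm c * (Cnorm a * Mf + Cnorm b * Mg)). intro x.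
    rewrite vnorm_scal. pose proof (Cnorm_nonneg c). pose proof (Cnorm_nonneg a).
    pose proof (Cnorm_nonneg b). pose proof (vnorm_nonneg _ x).
    rewrite Rmult_assoc. apply Rmult_le_compat_l; auto.
    eapply Rle_trans; [apply vnorm_triangle|]. rewrite !vnorm_scal.
    specialize (HMf x). specialize (HMg x).
    assert (Cnorm a * vnorm (f x) <= Cnorm a * (Mf * vnorm x)) by (apply Rmult_le_compat_l; auto).
    assert (Cnorm b * vnorm (g x) <= Cnorm b * (Mg * vnorm x)) by (apply Rmult_le_compat_l; auto).
    nra.
Qed.

Section AB.
Variables X Y : CBanach.
Variable A : Op X Y.
Variable B : Op Y X.
Hypothesis hA : linear_op A.
Hypothesis hB : linear_op B.

Lemma kernel_BA lam R1 : lam <> C0 -> is_resolvent (op_comp A B) lam R1 ->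
  forall v, dom (op_comp B A) v -> vsub (app (op_comp B A) v) (vscal lam v) = vzero -> v = vzero.
Proof.
  intros Hl [HR1b [_ HR1l]] v [Hv1 Hv2] H. simpl in H. apply vsub_eq0 in H.
  set (u := app A v) in *.
  assert (Hu : dom (op_comp A B) u) by (split; simpl; auto; rewrite H; apply lin_dom_scal; auto).
  specialize (HR1l u Hu). simpl in HR1l. rewrite H, (lin_scal _ _ A hA) in HR1l by auto.
  fold u in HR1l. rewrite vsub_self, (bl_0 _ _ R1 HR1b) in HR1l.
  rewrite <- HR1l, (lin_0 _ _ B hB) in H.
  rewrite <- (vscal_1 v), <- (Cmul_inv_l lam Hl), <- vscal_assoc, <- H. apply vscal_v0.
Qed.

Lemma BRA_identity lam R1 R : is_resolvent (op_comp A B) lam R1 ->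
  is_resolvent (op_comp B A) lam R ->
  forall x, dom A x -> app B (R1 (app A x)) = vadd (vscal lam (R x)) x.
Proof.
  intros [_ [HR1r _]] [HRb [_ HRl]] x Hx.
  destruct (HR1r (app A x)) as [[Hu1 Hu2] Hue]. simpl in Hue.
  set (u := R1 (app A x)) in *. set (z := app B u) in *.
  apply vsub_eq in Hue.
  assert (Hv : dom A (vsub z x)) by (apply lin_dom_sub; auto).
  assert (HAv : app A (vsub z x) = vscal lam u).
  { rewrite lin_sub, Hue, vadd_comm, vsub_add_r by auto. reflexivity. }
  assert (Hv' : dom (op_comp B A) (vsub z x)).
  { split; auto. rewrite HAv. apply lin_dom_scal; auto. }
  specialize (HRl _ Hv'). simpl in HRl. rewrite HAv, lin_scal, vscal_sub, vsub_sub_self in HRl by auto.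
  fold z in HRl. rewrite (bl_scal _ _ R HRb) in HRl. symmetry in HRl. apply vsub_eq in HRl. exact HRl.
Qed.

Lemma bl_BRAS lam mu R1 S : is_resolvent (op_comp A B) lam R1 -> is_resolvent (op_comp B A) mu S ->
  (exists M, forall y, vnorm (app B (R1 y)) <= M * vnorm y) ->
  (exists M, forall x, vnorm (app A (S x)) <= M * vnorm x) ->
  bounded_linear (fun x => app B (R1 (app A (S x)))).
Proof.
  intros [HR1b [HR1r _]] [HSb [HSr _]] [MB HMB] [MA HMA].
  assert (dA : forall x, dom A (S x)) by (intro x; apply (HSr x)).
  assert (dB : forall y, dom B (R1 y)) by (intro y; apply (HR1r y)).
  split; [|split].
  - intros x y. rewrite (bl_add _ _ S HSb), lin_add, (bl_add _ _ R1 HR1b), lin_add by auto. reflexivity.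
  - intros a x. rewrite (bl_scal _ _ S HSb), lin_scal, (bl_scal _ _ R1 HR1b), lin_scal by auto. reflexivity.
  - exists (Rabs MB * Rabs MA). intro x. eapply Rle_trans; [apply HMB|].
    eapply Rle_trans; [apply Rmult_le_compat_r; [apply vnorm_nonneg|apply RRle_abs]|].
    rewrite Rmult_assoc. apply Rmult_le_compat_l; [apply Rabs_pos|].
    eapply Rle_trans; [apply HMA|].
    apply Rmult_le_compat_r; [apply vnorm_nonneg|apply RRle_abs].
Qed.

Definition formula lam mu (R1 : Y -> Y) (S : X -> X) (x : X) : X :=
  vscal (Cinv lam) (vadd (vscal mu (S x)) (vscal (Csub lam mu) (app B (R1 (app A (S x)))))).

Lemma construct lam mu R1 S : lam <> C0 ->
  is_resolvent (op_comp A B) lam R1 -> is_resolvent (op_comp B A) mu S ->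
  (exists M, forall y, vnorm (app B (R1 y)) <= M * vnorm y) ->
  (exists M, forall x, vnorm (app A (S x)) <= M * vnorm x) ->
  is_resolvent (op_comp B A) lam (formula lam mu R1 S).
Proof.
  intros Hl HR1 HS HMB HMA.
  pose proof (bl_BRAS _ _ _ _ HR1 HS HMB HMA) as Hbl.
  pose proof HR1 as [HR1b [HR1r HR1l]]. pose proof HS as [HSb [HSr HSl]].
  pose proof (lin_comp B A hB hA) as HBA.
  assert (Hrange : forall x, dom (op_comp B A) (formula lam mu R1 S x) /\
     vsub (app (op_comp B A) (formula lam mu R1 S x)) (vscal lam (formula lam mu R1 S x)) = x).
  { intro x. unfold formula.
    destruct (HSr x) as [Hw Hwe]. set (w := S x) in *.
    destruct (HR1r (app A w)) as [[Hu1 Hu2] Hue]. simpl in Hue.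
    set (u := R1 (app A w)) in *. set (z := app B u) in *.
    apply vsub_eq in Hue.
    assert (Hz : dom (op_comp B A) z).
    { split; auto. rewrite Hue. apply lin_dom_add; auto. apply Hw. apply lin_dom_scal; auto. }
    assert (HBAz : app (op_comp B A) z = vadd (app (op_comp B A) w) (vscal lam z)).
    { simpl. rewrite Hue, lin_add, lin_scal; auto. apply Hw. apply lin_dom_scal; auto. }
    assert (Hd : dom (op_comp B A) (vscal (Cinv lam) (vadd (vscal mu w) (vscal (Csub lam mu) z)))).
    { apply lin_dom_scal; auto. apply lin_dom_add; auto; apply lin_dom_scal; auto. }
    split; [exact Hd|].
    rewrite (lin_scal _ _ _ HBA), (lin_add _ _ _ HBA), !(lin_scal _ _ _ HBA), HBAz; auto;
      try (apply lin_dom_scal; auto). 2: apply lin_dom_add; auto; apply lin_dom_scal; auto.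
    set (p := app (op_comp B A) w) in *. set (c := Csub lam mu).
    rewrite (vscal_distr_v c p), vadd_assoc, <- vscal_distr_s, vscal_assoc.
    replace (Cadd mu c) with lam by (unfold c; apply Ceq; simpl; ring).
    rewrite vscal_distr_v, !vscal_assoc, Cmul_inv_l by auto. rewrite vscal_1.
    replace (Cmul (Cinv lam) (Cmul c lam)) with c.
    2:{ destruct lam as [l1 l2]. pose proof (Cne0 _ Hl) as Hn. simpl in Hn. apply Ceq;
        unfold c, Cmul, Cinv, Csub, Cadd, Copp; cbn [Re Im]; field; lra. }
    rewrite Cmul_inv_r, vscal_1 by auto.
    rewrite vsub_add_same. exact Hwe. }
  split; [|split].
  - exact (bl_comb _ _ S _ mu (Csub lam mu) (Cinv lam) HSb Hbl).
  - exact Hrange.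
  - intros x Hx. destruct (Hrange (vsub (app (op_comp B A) x) (vscal lam x))) as [Hd He].
    apply vsub_eq0. apply (kernel_BA lam R1 Hl HR1).
    + apply lin_dom_sub; auto.
    + rewrite shift_lin by auto. rewrite He. apply vsub_self.
Qed.
End AB.

Lemma cgt_comp (Z W V : CBanach) (E : Op W V) (F : Z -> W) :
  linear_op E -> closed_op E -> bounded_linear F -> (forall z, dom E (F z)) ->
  exists M, 0 <= M /\ forall z, vnorm (app E (F z)) <= M * vnorm z.
Proof.
  intros HE HEc HF HdF. apply cgt.
  - intros y1 y2. rewrite (bl_add _ _ F HF), lin_add; auto.
  - intros a y. rewrite (bl_scal _ _ F HF), lin_scal; auto.
  - intros u y x Hu Hx. destruct (HEc (fun n => F (u n)) (F y) x) as [_ H]; auto.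
    apply bl_cont; auto.
Qed.

Lemma est_real (a b c L0 N0 KB KA m1 m2 q1 q2 : R) :
  0 < a -> 0 <= b -> 0 <= c -> 0 <= L0 -> 0 <= N0 -> 0 <= KB -> 0 <= KA -> 0 <= m1 -> 0 <= m2 ->
  0 <= q1 -> q1 <= a + L0 -> 0 <= q2 -> q2 <= b + N0 ->
  b * m2 + c * (KB * (1 + q1 * m1) * (KA * (1 + q2 * m2))) <=
  (KB * KA * (1 + L0) * (1 + N0) + 1) * Rmax 1 m1 * Rmax 1 m2 * (b + c * (2 + a) * (2 + b)).
Proof.
  intros. pose proof (Rmax_l 1 m1). pose proof (Rmax_r 1 m1).
  pose proof (Rmax_l 1 m2). pose proof (Rmax_r 1 m2).
  set (M1 := Rmax 1 m1) in *. set (M2 := Rmax 1 m2) in *.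
  assert (h1 : 1 + q1 * m1 <= M1 * ((1 + L0) * (2 + a))).
  { assert (q1 * m1 <= (a + L0) * M1) by (apply Rmult_le_compat; lra).
    assert (0 <= M1 * (1 + L0 + a * L0)) by (apply Rmult_le_pos; nra).
    replace (M1 * ((1 + L0) * (2 + a))) with (M1 + (a + L0) * M1 + M1 * (1 + L0 + a * L0)) by ring.
    lra. }
  assert (h2 : 1 + q2 * m2 <= M2 * ((1 + N0) * (2 + b))).
  { assert (q2 * m2 <= (b + N0) * M2) by (apply Rmult_le_compat; lra).
    assert (0 <= M2 * (1 + N0 + b * N0)) by (apply Rmult_le_pos; nra).
    replace (M2 * ((1 + N0) * (2 + b))) with (M2 + (b + N0) * M2 + M2 * (1 + N0 + b * N0)) by ring.
    lra. }
  assert (h3 : KB * (1 + q1 * m1) * (KA * (1 + q2 * m2)) <=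
               KB * (M1 * ((1 + L0) * (2 + a))) * (KA * (M2 * ((1 + N0) * (2 + b))))).
  { apply Rmult_le_compat.
    - apply Rmult_le_pos; nra.
    - apply Rmult_le_pos; nra.
    - apply Rmult_le_compat_l; auto.
    - apply Rmult_le_compat_l; auto. }
  set (K := KB * KA * (1 + L0) * (1 + N0)).
  assert (HK : 0 <= K) by (unfold K; repeat apply Rmult_le_pos; lra).
  assert (h4 : KB * (M1 * ((1 + L0) * (2 + a))) * (KA * (M2 * ((1 + N0) * (2 + b)))) =
               K * (M1 * M2) * ((2 + a) * (2 + b))) by (unfold K; ring).
  assert (h5 : 1 <= M1 * M2) by nra.
  assert (h6 : 0 <= (2 + a) * (2 + b)) by nra.
  assert (h7 : c * (KB * (1 + q1 * m1) * (KA * (1 + q2 * m2))) <= c * ((K + 1) * (M1 * M2) * ((2 + a) * (2 + b)))).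
  { apply Rmult_le_compat_l; auto. rewrite h4 in h3. nra. }
  assert (h8 : b * m2 <= b * ((K + 1) * (M1 * M2))).
  { apply Rmult_le_compat_l; auto. nra. }
  nra.
Qed.

Theorem theorem1p3 (X Y : CBanach) (A : Op X Y) (B : Op Y X)
  (hAlin : linear_op A) (hAcl : closed_op A) (hAd : densely_defined A)
  (hBlin : linear_op B) (hBcl : closed_op B) (hBd : densely_defined B)
  (hrhoAB : exists l, in_rho (op_comp A B) l)
  (hrhoBA : exists l, in_rho (op_comp B A) l) :
  (* sigma(AB) \ {0} = sigma(BA) \ {0} *)
  (forall lam, lam <> C0 -> (in_rho (op_comp A B) lam <-> in_rho (op_comp B A) lam)) /\
  (* resolvent formulas *)
  (forall lam mu (R1 : Y -> Y) (R2 R : X -> X),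
     lam <> C0 ->
     is_resolvent (op_comp A B) lam R1 ->
     is_resolvent (op_comp B A) mu R2 ->
     is_resolvent (op_comp B A) lam R ->
     (* the closure of B (AB - lam)^{-1} A (on dom A) is everywhere defined
        and equals lam (BA - lam)^{-1} + I *)
     (forall x y,
        in_graph_closure (mkOp (dom A) (fun x => app B (R1 (app A x)))) x y <->
        y = vadd (vscal lam (R x)) x) /\
     (forall x, R x = vscal (Cinv lam) (vadd (vscal mu (R2 x))
                        (vscal (Csub lam mu) (app B (R1 (app A (R2 x)))))))) /\
  (* resolvent estimate *)
  (exists Cst, Cst > 0 /\
     forall lam mu (R1 : Y -> Y) (R2 R : X -> X),
       lam <> C0 ->
       is_resolvent (op_comp A B) lam R1 ->
       is_resolvent (op_comp B A) mu R2 ->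
       is_resolvent (op_comp B A) lam R ->
       opnorm R <= Cst * Rmax 1 (opnorm R1) * Rmax 1 (opnorm R2) / Cnorm lam *
                   (Cnorm mu + Cnorm (Csub lam mu) * (2 + Cnorm lam) * (2 + Cnorm mu))).
Proof.
  destruct hrhoAB as [l0 [R0 HR0]]. destruct hrhoBA as [m0 [S0 HS0]].
  pose proof (lin_comp B A hBlin hAlin) as HBA. pose proof (lin_comp A B hAlin hBlin) as HAB.
  destruct (cgt_comp _ _ _ B R0 hBlin hBcl (proj1 HR0) (fun y => proj1 (proj1 (proj1 (proj2 HR0) y))))
    as [KB [HKB0 HKB]].
  destruct (cgt_comp _ _ _ A S0 hAlin hAcl (proj1 HS0) (fun x => proj1 (proj1 (proj1 (proj2 HS0) x))))
    as [KA [HKA0 HKA]].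
  assert (HBR : forall lam R1, is_resolvent (op_comp A B) lam R1 -> forall y,
     vnorm (app B (R1 y)) <= KB * (1 + Cnorm (Csub lam l0) * opnorm R1) * vnorm y).
  { intros lam R1 HR1. exact (res_comp_bound _ _ _ (app B) lam l0 R1 R0 KB HR1 HR0 HKB0 HKB). }
  assert (HAR : forall mu R2, is_resolvent (op_comp B A) mu R2 -> forall x,
     vnorm (app A (R2 x)) <= KA * (1 + Cnorm (Csub mu m0) * opnorm R2) * vnorm x).
  { intros mu R2 HR2. exact (res_comp_bound _ _ _ (app A) mu m0 R2 S0 KA HR2 HS0 HKA0 HKA). }
  assert (Hform : forall lam mu R1 R2 R, lam <> C0 -> is_resolvent (op_comp A B) lam R1 ->
     is_resolvent (op_comp B A) mu R2 -> is_resolvent (op_comp B A) lam R ->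
     forall x, R x = formula X Y A B lam mu R1 R2 x).
  { intros lam mu R1 R2 R Hl HR1 HR2 HR x.
    apply (res_unique _ _ lam R _ HR).
    apply construct; auto; eexists; [apply (HBR lam R1 HR1)|apply (HAR mu R2 HR2)]. }
  split; [|split].
  - intros lam Hl. split.
    + intros [R1 HR1]. exists (formula X Y A B lam m0 R1 S0).
      apply construct; auto; eexists; [apply (HBR lam R1 HR1)|apply HKA].
    + intros [R HR]. exists (formula Y X B A lam l0 R R0).
      apply construct; auto; eexists; [apply (HAR lam R HR)|apply HKB].
  - intros lam mu R1 R2 R Hl HR1 HR2 HR. split.
    + pose proof (BRA_identity _ _ A B hAlin hBlin lam R1 R HR1 HR) as Hid.
      pose proof (opnorm_nonneg _ _ R (proj1 HR)) as HM0.
      pose proof (opnorm_bound _ _ R (proj1 HR)) as HMR.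
      set (MR := opnorm R) in *. set (a := Cnorm lam).
      assert (Ha : 0 < a) by (apply Cnorm_pos; auto).
      assert (Hkey : forall x' x, dom A x' -> vnorm (vsub (app B (R1 (app A x'))) (vadd (vscal lam (R x)) x))
                       <= (a * MR + 1) * vnorm (vsub x' x)).
      { intros x' x0 Hx'. rewrite Hid by auto. rewrite vsub_add_distr, <- vscal_sub, <- (bl_sub _ _ R (proj1 HR)).
        eapply Rle_trans; [apply vnorm_triangle|]. rewrite vnorm_scal. fold a.
        specialize (HMR (vsub x' x0)). pose proof (vnorm_nonneg _ (vsub x' x0)).
        assert (a * vnorm (R (vsub x' x0)) <= a * (MR * vnorm (vsub x' x0))) by (apply Rmult_le_compat_l; lra).
        nra. }
      set (D := a * MR + 2).
      assert (HD : 0 < D) by (unfold D; nra).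
      intros x y. split.
      * intro Hc. apply vsub_eq0. apply vnorm_le_eps. intros e He.
        destruct (Hc (e / D)) as [x' [Hx' [H1 H2]]]. { apply Rdiv_lt_0_compat; lra. }
        simpl in Hx', H2. pose proof (Hkey x' x Hx'). rewrite vnorm_sub_sym in H1.
        pose proof (vnorm_sub_tri _ y (app B (R1 (app A x'))) (vadd (vscal lam (R x)) x)).
        assert ((a * MR + 1) * vnorm (vsub x' x) <= (a * MR + 1) * (e / D))
          by (apply Rmult_le_compat_l; [nra|lra]).
        assert (e / D + (a * MR + 1) * (e / D) = e) by (unfold D; field; apply Rgt_not_eq; nra).
        lra.
      * intro Hy. subst y. intros e He.
        destruct (hAd x (e / D)) as [x' [Hx' H1]]. { apply Rdiv_lt_0_compat; lra. }
        exists x'. split; [exact Hx'|]. simpl.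
        assert (e / D <= e / 2).
        { apply Rmult_le_compat_l; [lra|]. apply Rinv_le_contravar; unfold D; nra. }
        split; [lra|].
        rewrite vnorm_sub_sym. eapply Rle_lt_trans; [apply Hkey; auto|].
        rewrite vnorm_sub_sym.
        assert ((a * MR + 1) * vnorm (vsub x x') < (a * MR + 1) * (e / D))
          by (apply Rmult_lt_compat_l; nra).
        assert ((a * MR + 1) * (e / D) <= e).
        { replace e with (D * (e / D)) at 2 by (field; lra). apply Rmult_le_compat_r.
          left; apply Rdiv_lt_0_compat; lra. unfold D; lra. }
        lra.
    + apply (Hform lam mu R1 R2 R); auto.
  - exists (KB * KA * (1 + Cnorm l0) * (1 + Cnorm m0) + 1). split.
    { pose proof (Cnorm_nonneg l0). pose proof (Cnorm_nonneg m0).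
      assert (0 <= KB * KA * (1 + Cnorm l0) * (1 + Cnorm m0)) by (repeat apply Rmult_le_pos; lra). lra. }
    intros lam mu R1 R2 R Hl HR1 HR2 HR.
    pose proof (Cnorm_pos lam Hl) as Ha.
    pose proof (Cnorm_nonneg l0). pose proof (Cnorm_nonneg m0). pose proof (Cnorm_nonneg mu).
    pose proof (Cnorm_nonneg (Csub lam mu)).
    pose proof (opnorm_nonneg _ _ R1 (proj1 HR1)). pose proof (opnorm_nonneg _ _ R2 (proj1 HR2)).
    pose proof (est_real (Cnorm lam) (Cnorm mu) (Cnorm (Csub lam mu)) (Cnorm l0) (Cnorm m0) KB KA
                  (opnorm R1) (opnorm R2) (Cnorm (Csub lam l0)) (Cnorm (Csub mu m0))
                  Ha ltac:(lra) ltac:(lra) ltac:(lra) ltac:(lra) HKB0 HKA0 ltac:(lra) ltac:(lra)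
                  (Cnorm_nonneg _) (Cnorm_sub_le _ _) (Cnorm_nonneg _) (Cnorm_sub_le _ _)) as Hest.
    set (Cst := KB * KA * (1 + Cnorm l0) * (1 + Cnorm m0) + 1) in *.
    set (Q := Cnorm mu + Cnorm (Csub lam mu) * (2 + Cnorm lam) * (2 + Cnorm mu)) in *.
    set (P := Cst * Rmax 1 (opnorm R1) * Rmax 1 (opnorm R2)) in *.
    assert (HQ : 0 <= Q) by (unfold Q; apply Rplus_le_le_0_compat; [lra|]; repeat apply Rmult_le_pos; lra).
    assert (HP : 0 <= P).
    { unfold P. pose proof (Rmax_l 1 (opnorm R1)). pose proof (Rmax_l 1 (opnorm R2)).
      assert (0 <= Cst) by (unfold Cst; repeat apply Rmax_l; pose proof (Rmax_l 1 1);
        assert (0 <= KB * KA * (1 + Cnorm l0) * (1 + Cnorm m0)) by (repeat apply Rmult_le_pos; lra); lra).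
      repeat apply Rmult_le_pos; lra. }
    apply opnorm_le; [exact (proj1 HR)| |].
    { apply Rmult_le_pos; auto. unfold Rdiv. apply Rmult_le_pos; auto. left; apply Rinv_0_lt_compat; lra. }
    intro x. rewrite (Hform lam mu R1 R2 R Hl HR1 HR2 HR x). unfold formula.
    set (V := vadd (vscal mu (R2 x)) (vscal (Csub lam mu) (app B (R1 (app A (R2 x)))))).
    assert (HV : vnorm V = Cnorm lam * vnorm (vscal (Cinv lam) V)).
    { rewrite <- vnorm_scal, vscal_assoc, Cmul_inv_r, vscal_1 by auto. reflexivity. }
    assert (HV2 : vnorm V <= P * Q * vnorm x).
    { unfold V. eapply Rle_trans; [apply vnorm_triangle|]. rewrite !vnorm_scal.
      pose proof (opnorm_bound _ _ R2 (proj1 HR2) x).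
      pose proof (HBR lam R1 HR1 (app A (R2 x))). pose proof (HAR mu R2 HR2 x).
      pose proof (vnorm_nonneg _ x). pose proof (vnorm_nonneg _ (R2 x)).
      pose proof (vnorm_nonneg _ (app A (R2 x))).
      pose proof (Cnorm_nonneg (Csub lam l0)). pose proof (Cnorm_nonneg (Csub mu m0)).
      set (k1 := KB * (1 + Cnorm (Csub lam l0) * opnorm R1)) in *.
      set (k2 := KA * (1 + Cnorm (Csub mu m0) * opnorm R2)) in *.
      assert (Hk1 : 0 <= k1) by (unfold k1; apply Rmult_le_pos; nra).
      assert (Hk2 : 0 <= k2) by (unfold k2; apply Rmult_le_pos; nra).
      assert (vnorm (app B (R1 (app A (R2 x))))  <= k1 * (k2 * vnorm x)).
      { eapply Rle_trans; [eassumption|]. apply Rmult_le_compat_l; auto. }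
      assert (Cnorm mu * vnorm (R2 x) <= Cnorm mu * (opnorm R2 * vnorm x)) by (apply Rmult_le_compat_l; auto).
      assert (Cnorm (Csub lam mu) * vnorm (app B (R1 (app A (R2 x)))) <=
              Cnorm (Csub lam mu) * (k1 * (k2 * vnorm x))) by (apply Rmult_le_compat_l; auto).
      assert ((Cnorm mu * opnorm R2 + Cnorm (Csub lam mu) * (k1 * k2)) * vnorm x <= P * Q * vnorm x).
      { apply Rmult_le_compat_r; auto. }
      nra. }
    rewrite HV in HV2.
    replace (P / Cnorm lam * Q * vnorm x) with ((P * Q * vnorm x) / Cnorm lam) by (field; lra).
    apply Rmult_le_reg_l with (Cnorm lam); auto.
    replace (Cnorm lam * (P * Q * vnorm x / Cnorm lam)) with (P * Q * vnorm x) by (field; lra).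
    exact HV2.
Qed.
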